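(* Let $f$ be a scoring rule on a finite candidate set $C$ with $|C|=m$. Then $f$ is neutral and consistent with linearity if and only if $f$ is induced by a cost function $\mathrm{cost}_f$ such that: (1) for all ballots $A$ and axes $\triangleleft$, $\mathrm{cost}_f(A,\triangleleft)\ge 0$, and $\mathrm{cost}_f(A,\triangleleft)=0$ if and only if $A$ is an interval of $\triangleleft$; (2) for all $A$ and $\triangleleft$, $\mathrm{cost}_f(A,\triangleleft)=\mathrm{cost}_f(A,\overleftarrow{\triangleleft})$; (3) there is a function $g:\{0,1\}^m\to\mathbb R_{\ge0}$ such that for all $A$ and $\triangleleft$, $\mathrm{cost}_f(A,\triangleleft)=g(x_{A,\triangleleft})=g(x_{A,\overleftarrow{\triangleleft}})$.
   Context: Let $C$ be a finite set of $m$ candidates. An approval ballot is a nonempty subset $A\subseteq C$. A profile $P$ is a finite sequence (multiset) of approval ballots. An axis is a strict linear order $\triangleleft$ on $C$; $\overleftarrow{\triangleleft}$ denotes the reverse order; $\mathcal A$ is the set of all axes on $C$. A ballot $A$ is an interval of $\triangleleft$ if for all $a,b\in A$ and every $c$ with $a\triangleleft c\triangleleft b$ we have $c\in A$. A profile is linear if some axis makes all of its ballots intervals; $\mathrm{con}(P)$ is the set of such axes. An axis rule $f$ maps each profile $P$ to a nonempty set $f(P)\subseteq\mathcal A$ such that $\triangleleft\in f(P)$ implies $\overleftarrow{\triangleleft}\in f(P)$. A scoring rule is an axis rule for which there is a cost function $\mathrm{cost}:(2^C\setminus\{\emptyset\})\times\mathcal A\to\mathbb R_{\ge0}$ with $f(P)=\arg\min_{\triangleleft\in\mathcal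 A}\sum_{A\in P}\mathrm{cost}(A,\triangleleft)$ for every profile $P$; we then say $f$ is induced by this cost function. If $\triangleleft=c_1c_2\cdots c_m$ (i.e. $c_1\triangleleft c_2\triangleleft\cdots\triangleleft c_m$), the approval vector $x_{A,\triangleleft}\in\{0,1\}^m$ has $i$-th entry $1$ iff $c_i\in A$. $f$ is neutral if for every permutation $\pi$ of $C$ and every profile $P$, $f(\pi(P))=\pi(f(P))$, where $\pi$ acts on ballots elementwise and on axes by renaming candidates. $f$ is consistent with linearity if $f(P)=\mathrm{con}(P)$ for every linear profile $P$. *)

(* Defs.v *)
From HB Require Import structures.
From mathcomp Require Import all_boot all_order all_algebra all_fingroup.
From mathcomp Require Import reals.
Set Implicit Arguments. Unset Strict Implicit. Unset Printing Implicit Defensive.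
Import Order.TTheory GRing.Theory Num.Theory.
Local Open Scope ring_scope.

(* Candidates: a finite type C, with m = #|C|.
   An axis c_0 c_1 ... c_{m-1} is represented by its injective (hence
   bijective) rank function C -> 'I_#|C| : c_i has rank i. *)
Definition axis (C : finType) := {r : {ffun C -> 'I_#|C|} | injectiveb r}.

Definition rank (C : finType) (a : axis C) : C -> 'I_#|C| := val a.

Definition axlt (C : finType) (a : axis C) (x y : C) : bool :=
  (rank a x < rank a y)%N.

Lemma rev_axis_inj (C : finType) (a : axis C) :
  injectiveb [ffun c => rev_ord (rank a c)].
Proof.
apply/injectiveP => x y; rewrite !ffunE => /rev_ord_inj.
by move/injectiveP: (valP a); apply.
Qed.

Definition rev_axis (C : finType) (a : axis C) : axis C :=
  exist (fun r : {ffun C -> 'I_#|C|} => injectiveb r) _ (rev_axis_inj a).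

(* renaming an axis along a permutation pi of C: pi c gets rank of c *)
Lemma act_axis_inj (C : finType) (pi : {perm C}) (a : axis C) :
  injectiveb [ffun c => rank a ((pi^-1)%g c)].
Proof.
apply/injectiveP => x y; rewrite !ffunE => H.
move/injectiveP: (valP a) => /(_ _ _ H); exact: perm_inj.
Qed.

Definition act_axis (C : finType) (pi : {perm C}) (a : axis C) : axis C :=
  exist (fun r : {ffun C -> 'I_#|C|} => injectiveb r) _ (act_axis_inj pi a).

Definition is_interval (C : finType) (A : {set C}) (a : axis C) : Prop :=
  forall x y z : C, x \in A -> y \in A -> axlt a x z -> axlt a z y -> z \in A.

Definition profile (C : finType) (P : seq {set C}) : Prop :=
  forall A, A \in P -> A != set0.

Definition con (C : finType) (P : seq {set C}) : {set axis C} :=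
  [set a | [forall A in P, [forall x, [forall y, [forall z,
      [&& x \in A, y \in A, axlt a x z & axlt a z y] ==> (z \in A)]]]]].

Definition linear_profile (C : finType) (P : seq {set C}) : Prop :=
  con P != set0.

Definition axis_rule (C : finType) (f : seq {set C} -> {set axis C}) : Prop :=
  forall P, profile P ->
    f P != set0 /\ (forall a, a \in f P -> rev_axis a \in f P).

Definition total_cost (R : realType) (C : finType)
  (cost : {set C} -> axis C -> R) (P : seq {set C}) (a : axis C) : R :=
  \sum_(A <- P) cost A a.

(* f is induced by the cost function cost (costs of nonempty ballots
   are nonnegative; values on the empty set are irrelevant). *)
Definition induced_by (R : realType) (C : finType)
  (f : seq {set C} -> {set axis C}) (cost : {set C} -> axis C -> R) : Prop :=
  (forall A a, A != set0 -> 0 <= cost A a) /\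
  forall P, profile P ->
    f P = [set a | [forall b, total_cost cost P a <= total_cost cost P b]].

Definition scoring_rule (R : realType) (C : finType)
  (f : seq {set C} -> {set axis C}) : Prop :=
  axis_rule f /\ exists cost : {set C} -> axis C -> R, induced_by f cost.

Definition neutral (C : finType) (f : seq {set C} -> {set axis C}) : Prop :=
  forall (pi : {perm C}) (P : seq {set C}), profile P ->
    f [seq [set pi x | x in A] | A : {set C} <- P] = [set act_axis pi a | a in f P].

Definition consistent_with_linearity (C : finType)
  (f : seq {set C} -> {set axis C}) : Prop :=
  forall P, profile P -> linear_profile P -> f P = con P.

Definition approval_vector (C : finType) (A : {set C}) (a : axis C)
  : {ffun 'I_#|C| -> bool} :=
  [ffun i => [exists c in A, rank a c == i]].

(* Main.v *)
Require Import Defs.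
From HB Require Import structures.
From mathcomp Require Import all_boot all_order all_algebra all_fingroup.
From mathcomp Require Import reals.
Import Order.TTheory GRing.Theory Num.Theory.
Local Open Scope ring_scope.
Set Implicit Arguments. Unset Strict Implicit. Unset Printing Implicit Defensive.

Lemma rank_inj (C : finType) (a : axis C) : injective (rank a).
Proof. by move/injectiveP: (valP a). Qed.

Lemma axis_eq (C : finType) (a b : axis C) :
  (forall c, rank a c = rank b c) -> a = b.
Proof. by move=> H; apply: val_inj; apply/ffunP => c; exact: H. Qed.

Lemma rank_act (C : finType) (pi : {perm C}) (a : axis C) c :
  rank (act_axis pi a) c = rank a ((pi^-1)%g c).
Proof. by rewrite /rank /= ffunE. Qed.

Lemma rank_rev (C : finType) (a : axis C) c :
  rank (rev_axis a) c = rev_ord (rank a c).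
Proof. by rewrite /rank /= ffunE. Qed.

Lemma act_axisM (C : finType) (pi s : {perm C}) (a : axis C) :
  act_axis pi (act_axis s a) = act_axis (s * pi)%g a.
Proof. by apply: axis_eq => c; rewrite !rank_act invMg permM. Qed.

Lemma act_axis1 (C : finType) (a : axis C) : act_axis 1%g a = a.
Proof. by apply: axis_eq => c; rewrite !rank_act invg1 perm1. Qed.

Lemma act_axisK (C : finType) (pi : {perm C}) :
  cancel (act_axis pi) (act_axis pi^-1%g).
Proof. by move=> a; rewrite act_axisM mulgV act_axis1. Qed.

Lemma act_axisKV (C : finType) (pi : {perm C}) :
  cancel (act_axis pi^-1%g) (act_axis pi).
Proof. by move=> a; rewrite act_axisM mulVg act_axis1. Qed.

Lemma act_rev (C : finType) (pi : {perm C}) (a : axis C) :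
  act_axis pi (rev_axis a) = rev_axis (act_axis pi a).
Proof. by apply: axis_eq => c; rewrite !(rank_act, rank_rev). Qed.

Lemma rev_revK (C : finType) : involutive (@rev_axis C).
Proof. by move=> a; apply: axis_eq => c; rewrite !rank_rev rev_ordK. Qed.

Lemma imsetM (C : finType) (pi s : {perm C}) (A : {set C}) :
  [set pi x | x in [set s x | x in A]] = [set (s * pi)%g x | x in A].
Proof.
rewrite -imset_comp; apply: eq_imset => x /=; by rewrite permM.
Qed.

Lemma xvec_act (C : finType) (pi : {perm C}) (A : {set C}) (a : axis C) :
  approval_vector [set pi x | x in A] (act_axis pi a) = approval_vector A a.
Proof.
apply/ffunP => i; rewrite !ffunE; apply/existsP/existsP => [[c]|[c]].
  case/andP => /imsetP [d dA cd]; rewrite cd rank_act permK => e.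
  by exists d; rewrite dA.
case/andP => cA e; exists (pi c); rewrite mem_imset ?cA //=; last exact: perm_inj.
by rewrite rank_act permK.
Qed.

Lemma S_xvec (C : finType) (A : {set C}) (a : axis C) :
  [set c | approval_vector A a (rank a c)] = A.
Proof.
apply/setP => c; rewrite inE ffunE; apply/existsP/idP => [[d]|cA].
  by case/andP => dA /eqP /rank_inj <-.
by exists c; rewrite cA eqxx.
Qed.

Lemma xvec_rev (C : finType) (A : {set C}) (a : axis C) i :
  approval_vector A (rev_axis a) i = approval_vector A a (rev_ord i).
Proof.
rewrite !ffunE; apply: eq_existsb => c; rewrite rank_rev.
by congr (_ && _); apply/eqP/eqP => [<-|->]; rewrite rev_ordK.
Qed.

Lemma transitive_axis (C : finType) (a b : axis C) :
  exists pi : {perm C}, act_axis pi a = b.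
Proof.
have [h hK Kh] : bijective (rank a) by apply: inj_card_bij (@rank_inj _ a) _; rewrite card_ord.
have sinj : injective (fun c => h (rank b c)).
  by move=> x y /(can_inj Kh) /rank_inj.
exists (perm sinj)^-1%g; apply: axis_eq => c.
by rewrite rank_act invgK permE Kh.
Qed.

Definition amin (R : realType) (T : finType) (h : T -> R) : {set T} :=
  [set a | [forall b, h a <= h b]].

Lemma amin_comp (R : realType) (T : finType) (h : T -> R) (phi psi : T -> T) :
  cancel psi phi -> forall a, (a \in amin (fun x => h (phi x))) = (phi a \in amin h).
Proof.
move=> K a; rewrite !inE; apply/forallP/forallP => H b //.
by rewrite -(K b); exact: H.
Qed.

Lemma amin_shift (R : realType) (T : finType) (h : T -> R) k :
  amin (fun a => h a - k) = amin h.
Proof. by apply/setP => a; rewrite !inE; apply: eq_forallb => b; rewrite lerD2r. Qed.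

Lemma amin_sum (R : realType) (I T : finType) (i0 : I) (F : I -> T -> R)
  (S : {set T}) s0 : s0 \in S -> (forall i, amin (F i) = S) ->
  amin (fun a => \sum_i F i a) = S.
Proof.
move=> s0S HS; apply/setP => a; rewrite inE.
apply/forallP/idP => [H|aS b].
  apply/negPn/negP => aS.
  have lt : forall i, F i s0 < F i a.
    move=> i; move: aS; rewrite -(HS i) inE => /forallPn [b]; rewrite -ltNge => lb.
    move: s0S; rewrite -(HS i) inE => /forallP /(_ b) => h.
    exact: le_lt_trans h lb.
  have := H s0; rewrite leNgt => /negP; apply.
  apply: ltr_sum => //; apply/hasP; exists i0 => //; exact: mem_index_enum.
by apply: ler_sum => i _; move: aS; rewrite -(HS i) inE => /forallP; apply.
Qed.

Lemma intervalP (C : finType) (A : {set C}) (a : axis C) :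
  reflect (is_interval A a) [forall x, [forall y, [forall z,
      [&& x \in A, y \in A, axlt a x z & axlt a z y] ==> (z \in A)]]].
Proof.
apply: (iffP idP) => [H x y z xA yA l1 l2|H].
  by move/forallP: H => /(_ x) /forallP /(_ y) /forallP /(_ z); rewrite xA yA l1 l2.
apply/forallP => x; apply/forallP => y; apply/forallP => z; apply/implyP.
by case/and4P => xA yA l1 l2; exact: H xA yA l1 l2.
Qed.

Lemma conP (C : finType) (P : seq {set C}) (a : axis C) :
  (a \in con P) <-> (forall A, A \in P -> is_interval A a).
Proof.
rewrite inE; split => [/forallP H A AP|H].
  by move/implyP: (H A) => /(_ AP) /intervalP.
by apply/forallP => A; apply/implyP => AP; apply/intervalP; exact: H.
Qed.

Lemma con1 (C : finType) (A : {set C}) (a : axis C) :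
  (a \in con [:: A]) <-> is_interval A a.
Proof.
rewrite conP; split => [H|H B]; first by apply: H; rewrite mem_seq1.
by rewrite mem_seq1 => /eqP ->.
Qed.

Definition iseq (C : finType) (A : {set C}) := enum A ++ enum (~: A).

Lemma iseq_mem (C : finType) (A : {set C}) c : c \in iseq A.
Proof. by rewrite mem_cat !mem_enum inE; case: (c \in A). Qed.

Lemma iseq_size (C : finType) (A : {set C}) : size (iseq A) = #|C|.
Proof. by rewrite size_cat -!cardE cardsC. Qed.

Lemma iseq_lt (C : finType) (A : {set C}) c : (index c (iseq A) < #|C|)%N.
Proof. by rewrite -(iseq_size A) index_mem iseq_mem. Qed.

Definition iaxis_fun (C : finType) (A : {set C}) : {ffun C -> 'I_#|C|} :=
  [ffun c => Ordinal (iseq_lt A c)].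

Lemma iaxis_inj (C : finType) (A : {set C}) : injectiveb (iaxis_fun A).
Proof.
apply/injectiveP => x y; rewrite !ffunE => /(congr1 val) /= e.
by rewrite -(nth_index x (iseq_mem A x)) e nth_index // iseq_mem.
Qed.

Definition iaxis (C : finType) (A : {set C}) : axis C :=
  exist (fun r : {ffun C -> 'I_#|C|} => injectiveb r) _ (iaxis_inj A).

Lemma iaxis_interval (C : finType) (A : {set C}) : is_interval A (iaxis A).
Proof.
move=> x y z xA yA; rewrite /axlt /rank /= !ffunE /= /iseq !index_cat.
rewrite !mem_enum xA yA => _.
case: ifP => // zA; rewrite -cardE => l.
have : (index y (enum A) < #|A|)%N by rewrite cardE index_mem mem_enum.
move=> l2; have := leq_ltn_trans (leq_addr _ _) (ltn_trans l l2).
by rewrite ltnn.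
Qed.

Definition imP (C : finType) (pi : {perm C}) (P : seq {set C}) :=
  [seq [set pi x | x in A] | A : {set C} <- P].

Lemma profile_imP (C : finType) (pi : {perm C}) (P : seq {set C}) :
  profile P -> profile (imP pi P).
Proof. by move=> HP B /mapP [A AP ->]; rewrite imset_eq0; exact: HP. Qed.

Lemma amin_ext (R : realType) (T : finType) (h h' : T -> R) :
  (forall a, h a = h' a) -> amin h = amin h'.
Proof. by move=> H; apply/setP => a; rewrite !inE; apply: eq_forallb => b; rewrite !H. Qed.

Definition cost1 (R : realType) (C : finType) (c0 : {set C} -> axis C -> R)
  (A : {set C}) (a : axis C) : R :=
  \sum_(pi : {perm C}) (c0 [set pi x | x in A] (act_axis pi a)
                        + c0 [set pi x | x in A] (rev_axis (act_axis pi a))).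

Lemma cost1_act (R : realType) (C : finType) (c0 : {set C} -> axis C -> R)
  (s : {perm C}) (A : {set C}) (a : axis C) :
  cost1 c0 [set s x | x in A] (act_axis s a) = cost1 c0 A a.
Proof.
rewrite /cost1 [RHS](reindex_inj (mulgI s)) /=; apply: eq_bigr => pi _.
by rewrite imsetM act_axisM.
Qed.

Lemma cost1_rev (R : realType) (C : finType) (c0 : {set C} -> axis C -> R) (A : {set C}) (a : axis C) :
  cost1 c0 A (rev_axis a) = cost1 c0 A a.
Proof. by apply: eq_bigr => pi _; rewrite act_rev rev_revK addrC. Qed.

Lemma cost1_induced (R : realType) (C : finType) (f : seq {set C} -> {set axis C})
  (c0 : {set C} -> axis C -> R) :
  axis_rule f -> induced_by f c0 -> neutral f ->
  forall P, profile P -> f P = amin (total_cost (cost1 c0) P).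
Proof.
move=> Hax [_ Hind] Hneu P HP.
have [/set0Pn [s0 s0in] Hrev] := Hax P HP.
have Hrev' : forall Q, profile Q -> forall a, (rev_axis a \in f Q) = (a \in f Q).
  move=> Q HQ a; apply/idP/idP => H; last exact: (Hax Q HQ).2.
  by rewrite -(rev_revK a); exact: (Hax Q HQ).2.
set V := fun pi : {perm C} => total_cost c0 (imP pi P).
have eqV : forall pi, amin (V pi) = f (imP pi P).
  by move=> pi; rewrite (Hind _ (@profile_imP _ pi _ HP)).
have HW : forall pi, amin (fun a => V pi (act_axis pi a)) = f P.
  move=> pi; apply/setP => a; rewrite (amin_comp _ (act_axisKV pi)) eqV.
  rewrite (Hneu pi P HP) mem_imset //; exact: can_inj (act_axisK pi).
have HW' : forall pi, amin (fun a => V pi (rev_axis (act_axis pi a))) = f P.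
  move=> pi; apply/setP => a.
  rewrite (@amin_comp _ _ (V pi) (fun a => rev_axis (act_axis pi a))
             (fun b => act_axis pi^-1%g (rev_axis b))); last first.
    by move=> b; rewrite act_axisKV rev_revK.
  rewrite eqV (Hrev' _ (@profile_imP _ pi _ HP)).
  rewrite (Hneu pi P HP) mem_imset //; exact: can_inj (act_axisK pi).
have HF : forall pi, amin (fun a => V pi (act_axis pi a) + V pi (rev_axis (act_axis pi a))) = f P.
  move=> pi.
  rewrite (@amin_ext _ _ _ (fun a => \sum_(i : bool)
     (if i then V pi (act_axis pi a) else V pi (rev_axis (act_axis pi a))))); last first.
    by move=> a; rewrite big_bool.
  by apply: (amin_sum true s0in) => -[]; [exact: HW | exact: HW'].
rewrite (@amin_ext _ _ _ (fun a => \sum_(pi : {perm C})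
     (V pi (act_axis pi a) + V pi (rev_axis (act_axis pi a))))); last first.
  move=> a; rewrite /total_cost /cost1 exchange_big; apply: eq_bigr => pi _.
  by rewrite big_split /V /total_cost !big_map.
by rewrite (amin_sum 1%g s0in HF).
Qed.


Lemma backward (R : realType) (C : finType) (f : seq {set C} -> {set axis C})
  (cost : {set C} -> axis C -> R) :
  induced_by f cost ->
  (forall A a, A != set0 -> 0 <= cost A a /\ (cost A a = 0 <-> is_interval A a)) ->
  (exists g : {ffun 'I_#|C| -> bool} -> R,
        (forall x, 0 <= g x) /\
        forall A a, A != set0 ->
          cost A a = g (approval_vector A a) /\
          cost A a = g (approval_vector A (rev_axis a))) ->
  neutral f /\ consistent_with_linearity f.
Proof.
move=> [_ Hind] H1 [g [_ Hg]]; split.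
  move=> pi P HP; have HP' := @profile_imP _ pi _ HP.
  rewrite (Hind _ HP') (Hind _ HP).
  have Ht : forall b, total_cost cost (imP pi P) b = total_cost cost P (act_axis pi^-1%g b).
    move=> b; rewrite /total_cost big_map; apply: eq_big_seq => A AP.
    have AP0 := HP A AP.
    have AP1 : [set pi x | x in A] != set0 by rewrite imset_eq0.
    rewrite (Hg _ _ AP0).1 (Hg _ _ AP1).1 -(xvec_act pi A (act_axis pi^-1%g b)) act_axisKV.
    by [].
  apply/setP => a.
  have -> : (a \in [set a | [forall b, total_cost cost (imP pi P) a <= total_cost cost (imP pi P) b]])
     = (a \in amin (fun x => total_cost cost P (act_axis pi^-1%g x))).
    by rewrite !inE; apply: eq_forallb => b; rewrite !Ht.
  rewrite (amin_comp _ (act_axisK pi)).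
  rewrite -{2}(act_axisKV pi a) mem_imset //; exact: can_inj (act_axisK pi).
move=> P HP Hlin; rewrite (Hind _ HP).
have [a1 a1in] := set0Pn _ Hlin.
have ge0 : forall b, 0 <= total_cost cost P b.
  by move=> b; rewrite /total_cost big_seq; apply: sumr_ge0 => A AP; exact: (H1 _ _ (HP A AP)).1.
have tot0 : forall b, b \in con P -> total_cost cost P b = 0.
  move=> b /conP bc; rewrite /total_cost big_seq; apply: big1 => A AP.
  exact: (H1 _ _ (HP A AP)).2.2 (bc A AP).
apply/setP => a; rewrite inE; apply/forallP/idP => [H|ac b].
  have : total_cost cost P a == 0.
    by rewrite eq_le ge0 andbT -(tot0 _ a1in); exact: H.
  rewrite /total_cost big_seq psumr_eq0; last by move=> A AP; exact: (H1 _ _ (HP A AP)).1.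
  move/allP => Hall; apply/conP => A AP.
  apply/(H1 _ _ (HP A AP)).2; apply/eqP; move: (Hall A AP); rewrite AP; exact.
by rewrite tot0 // ge0.
Qed.

Lemma a0_inj (C : finType) : injectiveb [ffun c : C => enum_rank c].
Proof. by apply/injectiveP => x y; rewrite !ffunE; exact: enum_rank_inj. Qed.

Definition a0 (C : finType) : axis C :=
  exist (fun r : {ffun C -> 'I_#|C|} => injectiveb r) _ (a0_inj C).

Definition Mc (R : realType) (C : finType) (c0 : {set C} -> axis C -> R) (A : {set C}) : R :=
  cost1 c0 A (Order.arg_min (a0 C) xpredT (cost1 c0 A)).

Lemma Mc_le (R : realType) (C : finType) (c0 : {set C} -> axis C -> R) A b :
  Mc c0 A <= cost1 c0 A b.
Proof. by rewrite /Mc; case: arg_minP => // i _; apply. Qed.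

Lemma Mc_act (R : realType) (C : finType) (c0 : {set C} -> axis C -> R)
  (s : {perm C}) (A : {set C}) : Mc c0 [set s x | x in A] = Mc c0 A.
Proof.
apply/le_anti/andP; split.
  rewrite {2}/Mc -(cost1_act c0 s); exact: Mc_le.
rewrite {2}/Mc -(act_axisKV s (Order.arg_min (a0 C) xpredT (cost1 c0 [set s x | x in A]))).
rewrite cost1_act; exact: Mc_le.
Qed.

Definition cost3 (R : realType) (C : finType) (c0 : {set C} -> axis C -> R)
  (A : {set C}) (a : axis C) : R := cost1 c0 A a - Mc c0 A.

Lemma cost3_ge0 (R : realType) (C : finType) (c0 : {set C} -> axis C -> R) A a :
  0 <= cost3 c0 A a.
Proof. by rewrite /cost3 subr_ge0 Mc_le. Qed.

Lemma cost3_act (R : realType) (C : finType) (c0 : {set C} -> axis C -> R)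
  (s : {perm C}) (A : {set C}) (a : axis C) :
  cost3 c0 [set s x | x in A] (act_axis s a) = cost3 c0 A a.
Proof. by rewrite /cost3 cost1_act Mc_act. Qed.

Lemma cost3_rev (R : realType) (C : finType) (c0 : {set C} -> axis C -> R)
  (A : {set C}) (a : axis C) : cost3 c0 A (rev_axis a) = cost3 c0 A a.
Proof. by rewrite /cost3 cost1_rev. Qed.

Definition gfun (R : realType) (C : finType) (c0 : {set C} -> axis C -> R)
  (x : {ffun 'I_#|C| -> bool}) : R :=
  cost3 c0 [set c | x (rank (a0 C) c)] (a0 C).

Lemma gfun_spec (R : realType) (C : finType) (c0 : {set C} -> axis C -> R)
  (A : {set C}) (a : axis C) : gfun c0 (approval_vector A a) = cost3 c0 A a.
Proof.
have [s es] := transitive_axis a (a0 C).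
rewrite /gfun -(xvec_act s) es S_xvec -es cost3_act //.
Qed.

Lemma forward (R : realType) (C : finType) (f : seq {set C} -> {set axis C}) :
  scoring_rule R f -> neutral f -> consistent_with_linearity f ->
   exists cost : {set C} -> axis C -> R,
     induced_by f cost /\
     (forall A a, A != set0 ->
        0 <= cost A a /\ (cost A a = 0 <-> is_interval A a)) /\
     (forall A a, A != set0 -> cost A a = cost A (rev_axis a)) /\
     (exists g : {ffun 'I_#|C| -> bool} -> R,
        (forall x, 0 <= g x) /\
        forall A a, A != set0 ->
          cost A a = g (approval_vector A a) /\
          cost A a = g (approval_vector A (rev_axis a))).
Proof.
move=> [Hax [c0 Hc0]] Hneu Hcons.
have Hind1 := cost1_induced Hax Hc0 Hneu.
exists (cost3 c0); split; [split|split; [|split]].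
- by move=> A a _; exact: cost3_ge0.
- move=> P HP; rewrite (Hind1 P HP).
  rewrite -(amin_shift _ (\sum_(A <- P) Mc c0 A)).
  by apply: amin_ext => a; rewrite /total_cost /cost3 sumrB.
- move=> A a A0; split; first exact: cost3_ge0.
  have HP : profile [:: A] by move=> B; rewrite mem_seq1 => /eqP ->.
  have Hlin : linear_profile [:: A].
    by apply/set0Pn; exists (iaxis A); apply/con1; exact: iaxis_interval.
  have E : f [:: A] = amin (cost1 c0 A).
    by rewrite (Hind1 _ HP); apply: amin_ext => b; rewrite /total_cost big_seq1.
  rewrite -con1 -(Hcons _ HP Hlin) E inE /cost3.
  split => [H0|/forallP H].
    move/eqP: H0; rewrite subr_eq0 => /eqP H.
    by apply/forallP => b; rewrite H Mc_le.
  apply/eqP; rewrite subr_eq0 eq_le Mc_le andbT.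
  exact: H.
- by move=> A a _; rewrite cost3_rev.
- exists (gfun c0); split; first by move=> x; exact: cost3_ge0.
  by move=> A a _; rewrite !gfun_spec cost3_rev.
Qed.

Theorem mainTheorem4 (R : realType) (C : finType)
  (f : seq {set C} -> {set axis C}) :
  scoring_rule R f ->
  (neutral f /\ consistent_with_linearity f <->
   exists cost : {set C} -> axis C -> R,
     induced_by f cost /\
     (* (1) *)
     (forall A a, A != set0 ->
        0 <= cost A a /\ (cost A a = 0 <-> is_interval A a)) /\
     (* (2) *)
     (forall A a, A != set0 -> cost A a = cost A (rev_axis a)) /\
     (* (3) *)
     (exists g : {ffun 'I_#|C| -> bool} -> R,
        (forall x, 0 <= g x) /\
        forall A a, A != set0 ->
          cost A a = g (approval_vector A a) /\
          cost A a = g (approval_vector A (rev_axis a)))).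
Proof.
move=> Hs; split.
  by case=> Hn Hc; exact: forward Hs Hn Hc.
by case=> cost [Hi [H1 [_ H3]]]; exact: backward Hi H1 H3.
Qed.
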